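(* Let $\beta$ be a totally positive quadratic integer with $\operatorname{Tr}\beta > \operatorname{Nm}\beta$. Then there exists a constant $c_\beta > 0$ such that $p_\beta\big((\operatorname{Tr}\beta)\beta^n\big) \leq c_\beta$ for all $n \in \mathbb{Z}_{\geq 0}$.
   Context: A quadratic integer is a root of a monic irreducible quadratic polynomial in $\mathbb{Z}[x]$; it is totally positive if both it and its conjugate $\beta'$ are positive. $\operatorname{Tr}\beta = \beta + \beta'$, $\operatorname{Nm}\beta = \beta\beta'$. For $\alpha \in \mathbb{C}$, $p_\beta(\alpha) \in \mathbb{Z}_{\geq 0}\cup\{\infty\}$ is the number of polynomials $f \in \mathbb{Z}_{\geq 0}[x]$ (non-negative integer coefficients) with $f(\beta) = \alpha$. *)

(* Defs.v *)
From HB Require Import structures.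
From mathcomp Require Import all_boot all_order all_algebra.
Set Implicit Arguments. Unset Strict Implicit. Unset Printing Implicit Defensive.
Import Order.TTheory GRing.Theory Num.Theory.
Local Open Scope ring_scope.

Definition quad_poly (t m : int) : {poly int} := 'X^2 - t *: 'X + m%:P.

(* beta (in an ordered field R) is a quadratic integer with minimal polynomial
   X^2 - t X + m (monic, irreducible in Z[x]); then Tr beta = t, Nm beta = m
   and the conjugate of beta is t - beta. *)
Definition quad_int_with (R : realFieldType) (beta : R) (t m : int) : Prop :=
  irreducible_poly (quad_poly t m) /\ root (map_poly intr (quad_poly t m)) beta.

Definition totally_pos_with (R : realFieldType) (beta : R) (t : int) : Prop :=
  0 < beta /\ 0 < t%:~R - beta.

Definition nonneg_coef (f : {poly int}) : Prop := forall i : nat, 0 <= f`_i.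

(* The set counted by p_beta(alpha). *)
Definition pbeta_sols (R : realFieldType) (beta alpha : R) (f : {poly int}) : Prop :=
  nonneg_coef f /\ (map_poly intr f).[beta] = alpha.

(* p_beta(alpha) <= c  (in Z_{>=0} u {oo}): the solution set is finite,
   enumerated by a duplicate-free list of length at most c. *)
Definition pbeta_le (R : realFieldType) (beta alpha : R) (c : nat) : Prop :=
  exists s : seq {poly int},
    [/\ uniq s, (size s <= c)%N & forall f, f \in s <-> pbeta_sols beta alpha f].

(* Main.v *)
Require Import Defs.
From mathcomp Require Import all_boot all_order all_algebra.
From mathcomp Require Import ring lra zify.
Import Order.TTheory GRing.Theory Num.Theory.
Local Open Scope ring_scope.

Lemma size_quad (t m : int) : size (quad_poly t m) = 3%N.
Proof.
rewrite /quad_poly -addrA size_polyDl.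
  by rewrite size_polyXn.
rewrite size_polyXn; apply: (leq_ltn_trans (size_polyD _ _)).
rewrite gtn_max size_polyC; apply/andP; split; last by case: (m != 0).
by rewrite size_polyN (leq_ltn_trans (size_scale_leq _ _)) // size_polyX.
Qed.

Lemma no_rat_root (t m a b : int) : irreducible_poly (quad_poly t m) ->
  b != 0 -> a ^+ 2 + t * a * b + m * b ^+ 2 != 0.
Proof.
move=> [_ irr] bn0; apply/negP => /eqP E.
pose q : {poly int} := b *: 'X + a%:P.
have sq : size q = 2%N.
  rewrite /q size_polyDl ?size_scale ?size_polyX ?size_polyC //.
  by case: (a != 0).
have : q %| quad_poly t m.
  apply/Pdiv.Idomain.dvdpP; exists (b ^+ 2, b *: 'X - (t * b + a)%:P) => /=.
    by rewrite expf_neq0.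
  apply/eqP; rewrite -subr_eq0 /q /quad_poly -!mul_polyC.
  have -> : (b ^+ 2)%:P * ('X^2 - t%:P * 'X + m%:P) -
    (b%:P * 'X - (t * b + a)%:P) * (b%:P * 'X + a%:P) = 
    (a ^+ 2 + t * a * b + m * b ^+ 2)%:P.
    rewrite !expr2 !polyCD !polyCM. ring.
  by rewrite E polyC0.
move=> /(irr q); rewrite sq => /(_ isT) /eqp_size; by rewrite sq size_quad.
Qed.

Lemma horner_quad (R : realFieldType) (t m : int) (x : R) :
  (map_poly intr (quad_poly t m)).[x] = x ^+ 2 - t%:~R * x + m%:~R.
Proof.
rewrite /quad_poly rmorphD rmorphB /= map_polyXn map_polyZ map_polyX map_polyC /=.
by rewrite !hornerE.
Qed.

Lemma horner_small (R : realFieldType) (r : {poly int}) (x : R) :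
  (size r <= 2)%N -> (map_poly intr r).[x] = (r`_0)%:~R + (r`_1)%:~R * x.
Proof.
move=> sr; rewrite (@horner_coef_wide _ 2).
  by rewrite !big_ord_recr big_ord0 /= !coef_map /= expr0 expr1 mulr1 add0r.
by apply: leq_trans _ sr; rewrite /map_poly; apply: size_poly.
Qed.

Lemma conj_root (R : realFieldType) (beta : R) (t m : int) (g : {poly int}) :
  quad_int_with beta t m -> (map_poly intr g).[beta] = 0 ->
  (map_poly intr g).[t%:~R - beta] = 0.
Proof.
move=> [irr rt] g0.
have mon : quad_poly t m \is monic.
  by rewrite monicE /lead_coef size_quad /quad_poly !coefE /= mulr0 subr0 addr0.
have rt' : forall x : R, (map_poly intr (quad_poly t m)).[x] = 0 ->
   (map_poly intr g).[x] = (map_poly intr (g %% quad_poly t m)).[x].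
  move=> x hx; rewrite {1}(Pdiv.IdomainMonic.divp_eq mon g).
  by rewrite rmorphD rmorphM /= hornerD hornerM hx mulr0 add0r.
have Pb : (map_poly intr (quad_poly t m)).[beta] = 0 by apply/eqP.
have Pb' : (map_poly intr (quad_poly t m)).[t%:~R - beta] = 0.
  by move: Pb; rewrite !horner_quad => Pb; rewrite -Pb; ring.
have sr : (size (g %% quad_poly t m)%R <= 2)%N.
  have : (size (g %% quad_poly t m)%R < size (quad_poly t m))%N by rewrite ltn_modp -size_poly_eq0 size_quad.
  by rewrite size_quad.
move: g0; rewrite (rt' _ Pb) (rt' _ Pb') !horner_small //.
set a := _`_0; set b := _`_1 => h.
have [b0|bn0] := eqVneq b 0.
  by move: h; rewrite b0 mul0r addr0 => ->; rewrite add0r mul0r.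
exfalso; have := @no_rat_root t m a b irr bn0; apply/negP/negPn/eqP.
apply: (@intr_inj R).
move: Pb; rewrite horner_quad => Pb.
have ha : a%:~R = - (b%:~R * beta) :> R by rewrite -[LHS]subr0 -h; ring.
rewrite rmorph0 !rmorphD !rmorphM /= ha.
transitivity ((b%:~R ^+ 2) * (beta ^+ 2 - t%:~R * beta + m%:~R) : R); first ring.
by rewrite Pb mulr0.
Qed.

Lemma term_le (R : realFieldType) (f : {poly int}) (x : R) (k : nat) :
  nonneg_coef f -> 0 <= x -> (f`_k)%:~R * x ^+ k <= (map_poly intr f).[x].
Proof.
move=> nn x0.
have [lt|ge] := ltnP k (size f); last first.
  rewrite nth_default // mul0r horner_coef sumr_ge0 // => i _.
  by rewrite coef_map /= mulr_ge0 ?exprn_ge0 ?ler0z.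
rewrite (@horner_coef_wide _ (size f)); last first.
  by rewrite /map_poly size_poly.
rewrite (bigD1 (Ordinal lt)) //= coef_map /= lerDl sumr_ge0 // => i _.
by rewrite coef_map /= mulr_ge0 ?exprn_ge0 ?ler0z.
Qed.

Lemma bern_up (R : realFieldType) (x : R) (j : nat) : 2 <= x -> (j.+1)%:R <= x ^+ j.
Proof.
move=> x2; elim: j => [|j IH]; first by rewrite expr0.
rewrite exprS -natr1.
have : 0 <= x ^+ j by apply: exprn_ge0; lra.
have : 1 <= (j.+1)%:R :> R by rewrite ler1n.
nra.
Qed.

Lemma bern_down (R : realFieldType) (x a b : R) (j : nat) :
  0 <= x -> 0 < a -> 0 <= b -> x * (a + b) <= a -> x ^+ j * (a + j%:R * b) <= a.
Proof.
move=> x0 a0 b0 h; elim: j => [|j IH]; first by rewrite expr0 mul0r addr0 mul1r.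
rewrite exprS -natr1.
have xj : 0 <= x ^+ j by apply: exprn_ge0.
have jn : 0 <= j%:R :> R by [].
have H1 : a * (x * x ^+ j * (a + (j%:R + 1) * b)) <= (x ^+ j * (a + j%:R * b)) * (x * (a + b)).
  have : 0 <= x * x ^+ j * (j%:R * b * b) by rewrite !mulr_ge0.
  move=> hh; rewrite -subr_ge0.
  have -> : x ^+ j * (a + j%:R * b) * (x * (a + b)) - a * (x * x ^+ j * (a + (j%:R + 1) * b)) =
    x * x ^+ j * (j%:R * b * b) by ring.
  done.
have H2 : (x ^+ j * (a + j%:R * b)) * (x * (a + b)) <= a * a.
  apply: ler_pM IH h.
    by rewrite mulr_ge0 // addr_ge0 ?mulr_ge0 // ltW.
  by rewrite mulr_ge0 // addr_ge0 // ltW.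
have := le_trans H1 H2; rewrite ler_pM2l //.
Qed.

Lemma window (R : realFieldType) (g d : R) (T : nat) (f : {poly int}) (n : nat) :
  2 <= g -> g <= T%:R -> 0 < d -> d * T%:R <= T%:R - 1 -> nonneg_coef f ->
  (map_poly intr f).[g] = T%:R * g ^+ n -> (map_poly intr f).[d] = T%:R * d ^+ n ->
  forall k, ((k + T * T <= n)%N -> f`_k = 0) /\ ((n + T <= k)%N -> f`_k = 0)
     /\ f`_k <= (T ^ (T * T).+1)%N%:Z.
Proof.
move=> g2 gT d0 dT nn Fg Fd k.
have fk0 := nn k.
have T1 : 2 <= T%:R :> R by lra.
have Tp : (0 < T)%N by rewrite -(ltr_nat R); lra.
have lo : (k + T * T <= n)%N -> f`_k = 0.
  move=> hk; have kn : (k <= n)%N by lia.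
  have := @term_le _ f d k nn (ltW d0); rewrite Fd -(subnKC kn) exprD.
  set y := d ^+ (n - k)%N; set z := d ^+ k.
  have z0 : 0 < z by apply: exprn_gt0.
  have y0 : 0 <= y by apply: exprn_ge0; lra.
  have hy : y * ((T%:R - 1) + (n - k)%N%:R * 1) <= T%:R - 1.
    apply: bern_down; [lra|lra|lra|lra].
  have hnk : (T * T)%:R <= (n - k)%N%:R :> R by rewrite ler_nat; lia.
  rewrite natrM in hnk.
  have Ty : T%:R * y < 1 by nra.
  move=> h.
  have : (f`_k)%:~R < 1 :> R.
    have h2 : (T%:R * y) * z < 1 * z by rewrite ltr_pM2r.
    have : (f`_k)%:~R * z < 1 * z.
      apply: le_lt_trans h2; apply: (le_trans h); rewrite le_eqVlt; apply/orP; left; apply/eqP; ring.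
    by rewrite ltr_pM2r.
  move=> h1; have : (f`_k)%:~R < (1 : int)%:~R :> R by rewrite rmorph1.
  rewrite ltr_int => h3; lia.
have hi : (n + T <= k)%N -> f`_k = 0.
  move=> hk; have kn : (n <= k)%N by lia.
  have g0 : 0 <= g by lra.
  have := @term_le _ f g k nn g0; rewrite Fg -[X in g ^+ X](subnKC kn) exprD.
  set y := g ^+ (k - n)%N; set z := g ^+ n.
  have z0 : 0 < z by apply: exprn_gt0; lra.
  have := @bern_up _ g (k - n)%N g2; rewrite -/y => hy.
  have hnk : (T.+1)%:R <= (k - n).+1%:R :> R by rewrite ler_nat; lia.
  move=> h.
  have : ~ (1 <= f`_k).
    move=> f1; have : (1 : int)%:~R <= (f`_k)%:~R :> R by rewrite ler_int.
    rewrite rmorph1 => f1'.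
    rewrite -natr1 in hnk; rewrite -natr1 in hy.
    have yT : T%:R < y by lra.
    have A : T%:R * z < y * z by rewrite ltr_pM2r.
    have y0 : 0 <= y * z by apply: mulr_ge0; lra.
    have B : 1 * (y * z) <= (f`_k)%:~R * (y * z) by apply: ler_wpM2r.
    have C : (f`_k)%:~R * (y * z) <= T%:R * z.
      apply: le_trans h; rewrite le_eqVlt; apply/orP; left; apply/eqP; ring.
    lra.
  lia.
do 2 (split => //).
have [hk|hk] := leqP (k + T * T) n; first by rewrite lo //; lia.
have g1 : 0 < g by lra.
have := @term_le _ f g k nn (ltW g1); rewrite Fg.
have : g ^+ n <= g ^+ (k + T * T) by apply: ler_weXn2l; [lra | exact: ltnW].
rewrite exprD => hgn hf.
have gk0 : 0 < g ^+ k by apply: exprn_gt0.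
have gC : g ^+ (T * T) <= T%:R ^+ (T * T) by apply: lerXn2r; rewrite // nnegrE; lra.
have : (f`_k)%:~R <= (T ^ (T * T).+1)%N%:R :> R.
  rewrite natrX exprS.
  have : (f`_k)%:~R * g ^+ k <= T%:R * (g ^+ k * g ^+ (T * T)) :> R.
    apply: (le_trans hf); apply: ler_wpM2l => //; lra.
  move=> h2.
  have : (f`_k)%:~R <= T%:R * g ^+ (T * T) :> R.
    rewrite -(ler_pM2r gk0); apply: (le_trans h2); rewrite le_eqVlt; apply/orP; left; apply/eqP; ring.
  move=> h3; apply: (le_trans h3); apply: ler_wpM2l => //; lra.
by rewrite -(ler_int R) /=.
Qed.

Lemma box_count (Pb : pred {poly int}) (s W B : nat) :
  (forall f, Pb f -> forall k, ((k < s)%N -> f`_k = 0) /\ ((s + W < k)%N -> f`_k = 0)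
      /\ 0 <= f`_k <= B%:Z) ->
  exists l : seq {poly int}, [/\ uniq l, (size l <= B.+1 ^ W.+1)%N & forall f, f \in l = Pb f].
Proof.
move=> H.
pose mk (v : {ffun 'I_W.+1 -> 'I_B.+1}) : {poly int} :=
  \poly_(i < s + W.+1) (if (s <= i)%N then ((v (inord (i - s)) : nat)%:Z) else 0).
exists (filter Pb (undup (map mk (enum {ffun 'I_W.+1 -> 'I_B.+1})))); split.
- by rewrite filter_uniq // undup_uniq.
- rewrite size_filter; apply: leq_trans (count_size _ _) _.
  apply: leq_trans (size_undup _) _.
  by rewrite size_map -cardE card_ffun !card_ord.
move=> f; rewrite mem_filter mem_undup.
apply/andP/idP => [[//]|Pf]; split => //.
have Hf := H f Pf.
apply/mapP.
exists [ffun j : 'I_W.+1 => (inord (absz (f`_(s + j)%N)) : 'I_B.+1)]; first by rewrite mem_enum.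
apply/polyP => i; rewrite coef_poly.
have [h1 [h2 h3]] := Hf i.
case: ifP => [lt|ge]; last first.
  by rewrite h2 //; move/negbT: ge; rewrite -ltnNge; lia.
case: ifP => [le|gt]; last first.
  by rewrite h1 //; move/negbT: gt; rewrite -ltnNge.
rewrite ffunE (@inordK W (i - s)); last by lia.
rewrite subnKC // inordK; last by move: h3 => /andP[? ?]; lia.
by move: h3 => /andP[? ?]; lia.
Qed.

Lemma horner_shift (R : realFieldType) (f : {poly int}) (t : int) (n : nat) (x : R) :
  (map_poly intr (f - t *: 'X^n)).[x] = (map_poly intr f).[x] - t%:~R * x ^+ n.
Proof. by rewrite rmorphB /= map_polyZ map_polyXn !hornerE. Qed.

Theorem proposition11 (R : realFieldType) (beta : R) (t m : int) :
  quad_int_with beta t m ->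
  totally_pos_with beta t ->
  m < t ->
  exists c : nat, (0 < c)%N /\
    forall n : nat, pbeta_le beta (t%:~R * beta ^+ n) c.
Proof.
move=> Hq [b0 b'0] mt.
have [irr rt] := Hq.
have Pb : beta ^+ 2 - t%:~R * beta + m%:~R = 0.
  by rewrite -(@horner_quad R t m beta); apply/eqP.
have t0 : 0 < t by rewrite -(ltr_int R); lra.
have m1 : m != t - 1.
  apply/eqP => E; have := @no_rat_root t m (-1) 1 irr isT; rewrite E.
  by apply/negP/negPn/eqP; ring.
have mt2 : m <= t - 2 by lia.
have mt2R : m%:~R <= t%:~R - 2 :> R.
  have : m%:~R <= (t - 2)%:~R :> R by rewrite ler_int.
  by rewrite rmorphB.
pose T := `|t|%N.
have tT : t = T%:Z by rewrite /T; lia.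
have tTR : t%:~R = T%:R :> R by rewrite tT.
rewrite tTR in mt2R Pb b'0 *.
set b' := T%:R - beta in b'0 *.
have bT : 0 < T%:R - beta by exact: b'0.
have hm : beta * (T%:R - beta) = m%:~R by lra.
have key : exists g d : R, [/\ 2 <= g, g <= T%:R, 0 < d, d * T%:R <= T%:R - 1
   & (g = beta /\ d = b') \/ (g = b' /\ d = beta)].
  have [lt1|ge1] := ltP beta 1.
    exists b', beta; split; last by right.
    - rewrite /b'; have h1 : 0 < 1 - beta by lra.
      rewrite -subr_ge0; rewrite -(pmulr_rge0 _ h1); nra.
    - rewrite /b'; lra.
    - done.
    - nra.
  have g1 : 1 < beta.
    rewrite lt_neqAle ge1 andbT; apply/eqP => E; rewrite -E in hm; lra.
  exists beta, b'; split; last by left.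
  - have h1 : 0 < 1 - (T%:R - beta) by nra.
    rewrite -subr_ge0; rewrite -(pmulr_rge0 _ h1); nra.
  - rewrite /b' in b'0; lra.
  - done.
  - rewrite /b'; nra.
have [g [d [g2 gT d0 dT gd]]] := key.
have sols : forall n f, pbeta_sols beta (T%:R * beta ^+ n) f ->
    [/\ nonneg_coef f, (map_poly intr f).[g] = T%:R * g ^+ n
       & (map_poly intr f).[d] = T%:R * d ^+ n].
  move=> n f [nn Hf].
  have e0 : (map_poly intr (f - t *: 'X^n)).[beta] = 0 :> R.
    by rewrite horner_shift tTR Hf subrr.
  have := @conj_root R beta t m _ Hq e0; rewrite horner_shift tTR => /eqP; rewrite subr_eq0 => /eqP e1.
  by case: gd => [[-> ->]|[-> ->]].
pose C := (T * T)%N.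
exists ((T ^ C.+1).+1 ^ (C + T).+1)%N; split; first by rewrite expn_gt0.
move=> n.
pose solb (f : {poly int}) := all (fun a => 0 <= a) f &&
   ((map_poly intr f).[beta] == T%:R * beta ^+ n).
have eqv : forall f, pbeta_sols beta (T%:R * beta ^+ n) f <-> solb f.
  move=> f; split.
    move=> [nn Hf]; apply/andP; split; last by apply/eqP.
    by apply/(all_nthP 0) => i _; exact: nn i.
  move=> /andP[/(all_nthP 0) a /eqP e]; split => // i.
  have [h|h] := ltnP i (size f); first exact: a i h.
  by rewrite nth_default.
have [l [u sz mem]] : exists l : seq {poly int}, [/\ uniq l,
    (size l <= (T ^ C.+1).+1 ^ (C + T).+1)%N & forall f, f \in l = solb f].
  apply: (@box_count solb (n - C) (C + T) (T ^ C.+1)) => f /eqv sol k.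
  have [nn Fg Fd] := sols n f sol.
  have [lo [hi bd]] := @window R g d T f n g2 gT d0 dT nn Fg Fd k.
  split; first by move=> hk; apply: lo; rewrite /C in hk *; lia.
  split; first by move=> hk; apply: hi; rewrite /C in hk *; lia.
  by rewrite nn bd.
exists l; split => // f; rewrite mem; exact: iff_sym (eqv f).
Qed.
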